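(* Let $K$ be a precubical set, $\alpha\in K_0$ and $\epsilon\in\,]0,1[$. Let $\mathcal{G}^-_\alpha(K)$ be the quotient of the homotopy branching space $\mathcal{P}^-_\alpha(K,\epsilon)$ by the equivalence relation $\gamma_1\simeq^-\gamma_2$ if there exists $0<\epsilon'<\epsilon$ such that $\gamma_1\!\restriction_{[0,\epsilon']}=\gamma_2\!\restriction_{[0,\epsilon']}$. Then the map $\mathcal{G}^-_{0_2}(\partial\square[2])\to \mathcal{G}^-_{0_2}(\square[2])$ is not a closed inclusion, and therefore not an r-cofibration for $r\in\{q,m,h\}$.
   Context: ${\mathbf{Top}}$ denotes the category of $\Delta$-generated spaces (or of $\Delta$-Hausdorff $\Delta$-generated spaces), with internal hom $\mathbf{TOP}(-,-)$, equipped with its q-model structure (Quillen), m-model structure (mixed) or h-model structure (Hurewicz/Strøm); r-cofibration means cofibration of the r-model structure. $\square^{op}\mathbf{Set}$ is the category of precubical sets, $\square[n]$ the $n$-cube and $\partial\square[n]$ its boundary (cubes of dimension $\leqslant n-1$). For a precubical set $K$, $|K|_{geom}=\int^{[n]}K_n.[0,1]^n$ is its geometric realization and each $n$-cube $c$ induces $|c|_{geom}:[0,1]^n\to|K|_{geom}$. The initial vertex of an $n$-cube $c$ is $c^-=\partial_1^0\cdots\partial_n^0c$, and $\mathcal{C}^-_\alpha(K)=\{c\in K\mid\dim(c)\geqslant1,\ c^-=\alpha\}$. Let $0_n=(0,\dots,0)$. For $n\geqslant1$, $N_n(\epsilon)$ is the set of natural directed paths $\phi:[0,\epsilon]\to[0,1]^n$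 (non-decreasing in each coordinate, with sum of coordinates equal to $t$ at time $t$), with the $\Delta$-kelleyfication of the relative topology from $\mathbf{TOP}([0,\epsilon],[0,1]^n)$. Then $\mathcal{P}^-_\alpha(K,\epsilon)=\{|c|_{geom}\phi\mid c\in\mathcal{C}^-_\alpha(K),\ \phi\in N_{\dim(c)}(\epsilon)\}$ with the $\Delta$-kelleyfication of the relative topology from $\mathbf{TOP}([0,\epsilon],|K|_{geom})$. *)

(* Defs.v *)
From Stdlib Require Import Reals ProofIrrelevance ClassicalEpsilon
  FunctionalExtensionality PropExtensionality.
From Stdlib Require List.
From mathcomp Require Import all_boot.
Unset Printing Implicit Defensive.

Local Open Scope R_scope.

Definition pset (X : Type) := X -> Prop.
Definition topo (X : Type) := pset (pset X).

Definition tcont {X Y : Type} (TX : topo X) (TY : topo Y) (f : X -> Y) :=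
  forall V, TY V -> TX (fun x => V (f x)).

Definition tclosed {X : Type} (T : topo X) (C : pset X) := T (fun x => ~ C x).

Definition initial {X Y : Type} (TY : topo Y) (f : X -> Y) : topo X :=
  fun U => exists V, TY V /\ forall x, U x <-> V (f x).

Definition gen_top {X : Type} (B : pset (pset X)) : topo X :=
  fun U => forall x, U x -> exists l : list (pset X),
    List.Forall B l /\ List.Forall (fun b => b x) l /\
    forall y, List.Forall (fun b => b y) l -> U y.

Definition compact {X : Type} (T : topo X) (C : pset X) :=
  forall (I : Type) (U : I -> pset X), (forall i, T (U i)) ->
    (forall x, C x -> exists i, U i x) ->
    exists l : list I, forall x, C x -> exists i, List.In i l /\ U i x.

Definition compact_open {A B : Type} (TA : topo A) (TB : topo B) : topo (A -> B) :=
  gen_top (fun W => exists C V, compact TA C /\ TB V /\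
                      forall f, W f <-> (forall a, C a -> V (f a))).

Definition prod_top {A B : Type} (TA : topo A) (TB : topo B) : topo (A * B) :=
  gen_top (fun W => (exists U, TA U /\ forall p, W p <-> U p.1) \/
                    (exists V, TB V /\ forall p, W p <-> V p.2)).

(** [0,1]^n : points are sequences vanishing from index n on *)
Definition cube (n : nat) :=
  {x : nat -> R | forall k, ((k < n)%N -> 0 <= x k <= 1) /\ ((n <= k)%N -> x k = 0)}.

Definition cube_top (n : nat) : topo (cube n) :=
  fun U => forall x, U x -> exists r, 0 < r /\ forall y : cube n,
    (forall k, (k < n)%N -> Rabs (proj1_sig y k - proj1_sig x k) < r) -> U y.

Definition Iv (e : R) := {t : R | 0 <= t <= e}.

Definition Iv_top (e : R) : topo (Iv e) :=
  fun U => forall x, U x -> exists r, 0 < r /\ forall y : Iv e,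
    Rabs (proj1_sig y - proj1_sig x) < r -> U y.

Definition Iv1_0 : Iv 1 := exist _ 0 (conj (Rle_refl 0) Rle_0_1).

Definition simplex (n : nat) :=
  {x : nat -> R | (forall k, (k <= n)%N -> 0 <= x k) /\
                  (forall k, (n < k)%N -> x k = 0) /\ sum_f_R0 x n = 1}.

Definition simplex_top (n : nat) : topo (simplex n) :=
  fun U => forall x, U x -> exists r, 0 < r /\ forall y : simplex n,
    (forall k, (k <= n)%N -> Rabs (proj1_sig y k - proj1_sig x k) < r) -> U y.

(** Delta-kelleyfication: final topology w.r.t. all continuous maps from
    topological simplices *)
Definition kel {X : Type} (T : topo X) : topo X :=
  fun U => forall n (phi : simplex n -> X), tcont (simplex_top n) T phi ->
    simplex_top n (fun s => U (phi s)).

Definition delta_generated {X : Type} (T : topo X) := forall U, kel T U -> T U.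

(** closed inclusion in the category of Delta-generated spaces: injective,
    closed image, and the source carries the Delta-kelleyfication of the
    relative topology *)
Definition closed_inclusion {X Y : Type} (TX : topo X) (TY : topo Y) (f : X -> Y) :=
  injective f /\ tclosed TY (fun y => exists x, y = f x) /\
  forall U, TX U <-> kel (initial TY f) U.

(** Hurewicz cofibration (homotopy extension property w.r.t. all
    Delta-generated spaces; products are Delta-kelleyfied) *)
Definition hurewicz_cof {A X : Type} (TA : topo A) (TX : topo X) (f : A -> X) :=
  forall (Z : Type) (TZ : topo Z), delta_generated TZ ->
  forall (h : X -> Z) (H : A * Iv 1 -> Z),
    tcont TX TZ h -> tcont (kel (prod_top TA (Iv_top 1))) TZ H ->
    (forall a, H (a, Iv1_0) = h (f a)) ->
    exists H' : X * Iv 1 -> Z,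
      tcont (kel (prod_top TX (Iv_top 1))) TZ H' /\
      (forall x, H' (x, Iv1_0) = h x) /\ (forall a t, H' (f a, t) = H (a, t)).

(** h-cofibrations (Strom/Hurewicz model structure) = closed Hurewicz cofibrations *)
Definition h_cofibration {A X : Type} (TA : topo A) (TX : topo X) (f : A -> X) :=
  closed_inclusion TA TX f /\ hurewicz_cof TA TX f.

(** * Precubical sets (faces indexed from 0: face n i a is d_{i+1}^a) *)

Record precubical := Precubical {
  cell :> nat -> Type;
  face : forall n, nat -> bool -> cell n.+1 -> cell n;
  face_comm : forall n i j a b (c : cell n.+2), (i < j)%N -> (j <= n.+1)%N ->
    face n i a (face n.+1 j b c) = face n j.-1 b (face n.+1 i a c) }.

Record pc_hom (K L : precubical) := PcHom {
  hmap : forall n, K n -> L n;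
  hface : forall n i a (c : K n.+1), (i <= n)%N ->
    hmap n (face K n i a c) = face L n i a (hmap n.+1 c) }.
Arguments hmap {K L} _ {n}.
Arguments hface {K L} _ {n}.

(** initial vertex c^- = d_1^0 ... d_n^0 c *)
Fixpoint init_vertex (K : precubical) (n : nat) : K n -> K 0%N :=
  match n return K n -> K 0%N with
  | 0%N => fun c => c
  | m.+1 => fun c => init_vertex K m (face K m m false c)
  end.
Arguments init_vertex {K n}.

(** coface map delta_i^a : [0,1]^n -> [0,1]^(n+1), inserting a at position i *)
Definition ins (i : nat) (a : bool) (x : nat -> R) : nat -> R :=
  fun k => if (k < i)%N then x k else if k == i then (if a then 1 else 0) else x k.-1.

(** geometric realization |K| = coend of K_n . [0,1]^n *)
Definition rpt (K : precubical) := {n : nat & (K n * cube n)%type}.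
Definition mkpt (K : precubical) (n : nat) (c : K n) (x : cube n) : rpt K :=
  existT (fun m => (K m * cube m)%type) n (c, x).
Arguments mkpt {K n}.

Definition rbase (K : precubical) (p q : rpt K) :=
  exists n i a (c : K n.+1) (x : cube n) (y : cube n.+1), (i <= n)%N /\
    p = mkpt (face K n i a c) x /\ q = mkpt c y /\
    forall k, proj1_sig y k = ins i a (proj1_sig x) k.
Arguments rbase {K}.

Definition Rgen (K : precubical) (p q : rpt K) :=
  forall E : rpt K -> rpt K -> Prop,
    (forall p, E p p) -> (forall p q, E p q -> E q p) ->
    (forall p q r, E p q -> E q r -> E p r) ->
    (forall p q, rbase p q -> E p q) -> E p q.
Arguments Rgen {K}.

Definition cls (K : precubical) (p : rpt K) : pset (rpt K) := fun q => Rgen p q.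
Arguments cls {K}.

Definition real (K : precubical) := {S : pset (rpt K) | exists p, S = cls p}.

Definition rcell (K : precubical) (n : nat) (c : K n) (x : cube n) : real K :=
  exist _ (cls (mkpt c x)) (ex_intro _ _ erefl).
Arguments rcell {K n}.

Definition real_top (K : precubical) : topo (real K) :=
  fun U => forall n (c : K n), cube_top n (fun x => U (rcell c x)).

Definition natural_path (n : nat) (e : R) (phi : Iv e -> cube n) :=
  (forall k (s t : Iv e), proj1_sig s <= proj1_sig t ->
      proj1_sig (phi s) k <= proj1_sig (phi t) k) /\
  (forall t : Iv e, sum_f_R0 (proj1_sig (phi t)) n.-1 = proj1_sig t).
Arguments natural_path {n e}.

Definition Pm_pred (K : precubical) (alpha : K 0%N) (e : R) (g : Iv e -> real K) :=
  exists n (c : K n.+1), init_vertex c = alpha /\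
    exists phi : Iv e -> cube n.+1, natural_path phi /\
      forall t, g t = rcell c (phi t).
Arguments Pm_pred {K} alpha {e}.

Definition Pm (K : precubical) (alpha : K 0%N) (e : R) := {g : Iv e -> real K | Pm_pred alpha g}.
Arguments Pm {K}.

Definition TOP_top (K : precubical) (e : R) : topo (Iv e -> real K) :=
  kel (compact_open (Iv_top e) (real_top K)).

Definition Pm_top (K : precubical) (alpha : K 0%N) (e : R) : topo (Pm alpha e) :=
  kel (initial (TOP_top K e) (@proj1_sig _ _)).
Arguments Pm_top {K}.

Definition germ_eq {X : Type} (e : R) (g1 g2 : Iv e -> X) :=
  exists e', 0 < e' < e /\ forall t : Iv e, proj1_sig t <= e' -> g1 t = g2 t.

Definition G (K : precubical) (alpha : K 0%N) (e : R) :=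
  {S : pset (Pm alpha e) | exists g : Pm alpha e,
      S = fun d => germ_eq e (proj1_sig g) (proj1_sig d)}.
Arguments G {K}.

Definition gq (K : precubical) (alpha : K 0%N) (e : R) (g : Pm alpha e) : G alpha e :=
  exist _ (fun d => germ_eq e (proj1_sig g) (proj1_sig d)) (ex_intro _ g erefl).
Arguments gq {K alpha e}.

Definition G_top (K : precubical) (alpha : K 0%N) (e : R) : topo (G alpha e) :=
  fun U => Pm_top alpha e (fun g => U (gq g)).
Arguments G_top {K}.

Section Functor.
Variables (K L : precubical) (f : pc_hom K L).

Definition fpt (p : rpt K) : rpt L :=
  mkpt (hmap f (projT2 p).1) (projT2 p).2.

Definition real_map (S : real K) : real L :=
  let p := proj1_sig (constructive_indefinite_description _ (proj2_sig S)) in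
  exist _ (cls (fpt p)) (ex_intro _ _ erefl).

Lemma Rgen_refl {M : precubical} (p : rpt M) : Rgen p p.
Proof. by rewrite /Rgen => E r _ _ _. Qed.
Lemma Rgen_sym {M : precubical} {p q : rpt M} : Rgen p q -> Rgen q p.
Proof. by move=> H; rewrite /Rgen => E r s t b; apply s; apply: (H E r s t b). Qed.
Lemma Rgen_trans {M : precubical} {p q u : rpt M} : Rgen p q -> Rgen q u -> Rgen p u.
Proof. by move=> H1 H2; rewrite /Rgen => E r s t b; apply (t _ q); [apply: (H1 E r s t b)|apply: (H2 E r s t b)]. Qed.
Lemma Rgen_base {M : precubical} {p q : rpt M} : rbase p q -> Rgen p q.
Proof. by move=> H; rewrite /Rgen => E r s t b; apply: b. Qed.

Lemma Rgen_map (p q : rpt K) : Rgen p q -> Rgen (fpt p) (fpt q).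
Proof.
move=> H; apply: (H (fun p q => Rgen (fpt p) (fpt q))).
- by move=> r; apply: Rgen_refl.
- by move=> r s; apply: Rgen_sym.
- by move=> r s t; apply: Rgen_trans.
move=> r s [n [i [a [c [x [y [Hi [-> [-> Hy]]]]]]]]].
apply: Rgen_base; exists n, i, a, (hmap f c), x, y; split=> //.
by rewrite /fpt /= hface.
Qed.

Lemma cls_eq {M : precubical} {p q : rpt M} : Rgen p q -> cls p = cls q.
Proof.
move=> H; apply: functional_extensionality => r; apply: propositional_extensionality.
rewrite /cls; split=> H'; first exact: (Rgen_trans (Rgen_sym H) H').
exact: (Rgen_trans H H').
Qed.

Lemma real_eq {M : precubical} (S T : real M) : proj1_sig S = proj1_sig T -> S = T.
Proof.
case: S => S HS; case: T => T HT /= E; subst T.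
by rewrite (proof_irrelevance _ HS HT).
Qed.

Lemma real_map_cell n (c : K n) (x : cube n) :
  real_map (rcell c x) = rcell (hmap f c) x.
Proof.
apply: real_eq; rewrite /real_map /=.
case: (constructive_indefinite_description _ _) => p /= Hp.
have Hr : Rgen (mkpt c x) p by rewrite -/(cls (mkpt c x) p) Hp; apply: Rgen_refl.
exact: (cls_eq (Rgen_sym (Rgen_map _ _ Hr))).
Qed.

Lemma init_vertex_map n (c : K n) : init_vertex (hmap f c) = hmap f (init_vertex c).
Proof.
elim: n c => [//|n IH] c /=.
by rewrite -hface // IH.
Qed.

Lemma Pm_map_pred (alpha : K 0%N) (e : R) (g : Pm alpha e) :
  Pm_pred (hmap f alpha) (fun t => real_map (proj1_sig g t)).
Proof.
case: g => g [n [c [Hc [phi [Hphi Hg]]]]] /=.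
exists n, (hmap f c); split; first by rewrite init_vertex_map Hc.
exists phi; split=> // t; by rewrite Hg real_map_cell.
Qed.

Definition Pm_map (alpha : K 0%N) (e : R) (g : Pm alpha e) : Pm (hmap f alpha) e :=
  exist _ _ (Pm_map_pred alpha e g).

Definition G_map (alpha : K 0%N) (e : R) (S : G alpha e) : G (hmap f alpha) e :=
  gq (Pm_map alpha e (proj1_sig (constructive_indefinite_description _ (proj2_sig S)))).

End Functor.

(** vertices: (x0,x1) in {0,1}^2;  edges: (d,v) with d = false: coordinate 0
    free and coordinate 1 equal to v; d = true: coordinate 1 free and
    coordinate 0 equal to v *)
Definition vface (a : bool) (e : bool * bool) : bool * bool :=
  if e.1 then (e.2, a) else (a, e.2).
Definition eface (i : nat) (a : bool) : bool * bool :=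
  if i == 0%N then (true, a) else (false, a).

Definition sq2_cell (n : nat) : Type :=
  match n with 0 => (bool * bool)%type | 1 => (bool * bool)%type | 2 => unit | _ => Empty_set end.

Definition sq2_face (n : nat) : nat -> bool -> sq2_cell n.+1 -> sq2_cell n :=
  match n return nat -> bool -> sq2_cell n.+1 -> sq2_cell n with
  | 0 => fun _ a e => vface a e
  | 1 => fun i a _ => eface i a
  | _.+2 => fun _ _ v => match v with end
  end.

Lemma sq2_comm n i j a b (c : sq2_cell n.+2) : (i < j)%N -> (j <= n.+1)%N ->
  sq2_face n i a (sq2_face n.+1 j b c) = sq2_face n j.-1 b (sq2_face n.+1 i a c).
Proof.
case: n c => [|n] c; last by case: c.
case: j => [|[|j]] //; case: i => //.
Qed.

Definition sq2 : precubical := Precubical sq2_cell sq2_face sq2_comm.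

Definition bd2_cell (n : nat) : Type :=
  match n with 0 => (bool * bool)%type | 1 => (bool * bool)%type | _ => Empty_set end.

Definition bd2_face (n : nat) : nat -> bool -> bd2_cell n.+1 -> bd2_cell n :=
  match n return nat -> bool -> bd2_cell n.+1 -> bd2_cell n with
  | 0 => fun _ a e => vface a e
  | _.+1 => fun _ _ v => match v with end
  end.

Lemma bd2_comm n i j a b (c : bd2_cell n.+2) : (i < j)%N -> (j <= n.+1)%N ->
  bd2_face n i a (bd2_face n.+1 j b c) = bd2_face n j.-1 b (bd2_face n.+1 i a c).
Proof. by case: c. Qed.

Definition bd2 : precubical := Precubical bd2_cell bd2_face bd2_comm.

Definition incl2_map (n : nat) : bd2 n -> sq2 n :=
  match n return bd2_cell n -> sq2_cell n with
  | 0 => fun x => x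
  | 1 => fun x => x
  | _.+2 => fun v => match v with end
  end.

Lemma incl2_face n i a (c : bd2 n.+1) : (i <= n)%N ->
  incl2_map n (face bd2 n i a c) = face sq2 n i a (incl2_map n.+1 c).
Proof. by case: n c => [|n] c //; case: c. Qed.

Definition incl2 : pc_hom bd2 sq2 := PcHom bd2 sq2 incl2_map incl2_face.

Definition v00 : bool * bool := (false, false).

(* Main.v *)
Require Import Defs.
From Stdlib Require Import Reals Lra ProofIrrelevance ClassicalEpsilon
  FunctionalExtensionality PropExtensionality.
From Stdlib Require List.
From mathcomp Require Import all_boot.
Unset Printing Implicit Defensive.
Local Open Scope R_scope.

Ltac rcases := unfold Rmin, Rmax in *; repeat destruct Rle_dec; try split_Rabs; lra.

Definition mm (t s : R) := Rmin t (Rmax s 0).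
Definition psi (s t : R) (k : nat) : R :=
  match k with 0%N => (t + mm t s)/2 | 1%N => (t - mm t s)/2 | _ => 0 end.

Lemma psi_cube eps (He : eps < 1) s (t : Iv eps) : forall k,
  ((k < 2)%N -> 0 <= psi s (proj1_sig t) k <= 1) /\ ((2 <= k)%N -> psi s (proj1_sig t) k = 0).
Proof.
case: t => t /= Ht k; case: k => [|[|k]] /=; split=> // _; rewrite /mm; rcases.
Qed.

Definition cpt eps (He : eps < 1) s (t : Iv eps) : cube 2 :=
  exist _ (psi s (proj1_sig t)) (psi_cube eps He s t).

Definition gam eps (He : eps < 1) s (t : Iv eps) : real sq2 :=
  @rcell sq2 2%N tt (cpt eps He s t).

Lemma gam_Pm eps He s : Pm_pred (v00 : sq2 0%N) (gam eps He s).
Proof.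
exists 1%N, tt; split; first by [].
exists (cpt eps He s); split=> //; split.
- move=> k [a Ha] [b Hb] /= Hab; case: k => [|[|k]] /=; rewrite /mm; try rcases; lra.
- move=> [t Ht] /=; rewrite /mm; lra.
Qed.

Lemma psi_lip s s' t t' k : (k < 2)%N ->
  Rabs (psi s t k - psi s' t' k) <= Rabs (s - s') + Rabs (t - t').
Proof. case: k => [|[|k]] //= _; rewrite /mm; rcases. Qed.

Lemma tcont_kel {X} (T : topo X) n (f : simplex n -> X) :
  tcont (simplex_top n) T f -> tcont (simplex_top n) (kel T) f.
Proof. by move=> Hf V HV; apply: HV. Qed.

Lemma simplex_top_ext n (U U' : pset (simplex n)) :
  (forall x, U x <-> U' x) -> simplex_top n U -> simplex_top n U'.
Proof.
move=> E HU x /E Hx; have [r [Hr Hb]] := HU x Hx.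
by exists r; split=> // y Hy; apply/E/Hb.
Qed.

Lemma tcont_initial {X Y} (T : topo Y) (g : X -> Y) n (f : simplex n -> X) :
  tcont (simplex_top n) T (fun s => g (f s)) -> tcont (simplex_top n) (initial T g) f.
Proof.
move=> Hf V [W [HW HV]]; apply: (simplex_top_ext _ _ _ _ (Hf W HW)).
by move=> x; rewrite HV.
Qed.

Lemma inter_open n X (F : simplex n -> X) (l : list (pset X)) x :
  List.Forall (fun b => simplex_top n (fun s => b (F s))) l ->
  List.Forall (fun b => b (F x)) l ->
  exists r, 0 < r /\ forall y, (forall k, (k <= n)%N -> Rabs (proj1_sig y k - proj1_sig x k) < r) ->
    List.Forall (fun b => b (F y)) l.
Proof.
elim: l => [|b l IH] H1 H2.
  by exists 1; split; [lra| move=> *; constructor].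
inversion H1; inversion H2; subst.
have [r1 [Hr1 Hb1]] := H3 x H7.
have [r2 [Hr2 Hb2]] := IH H4 H8.
exists (Rmin r1 r2); split; first by rcases.
move=> y Hy; constructor.
  by apply: Hb1 => k Hk; have := Hy k Hk; rcases.
by apply: Hb2 => k Hk; have := Hy k Hk; rcases.
Qed.

Lemma gen_top_cont n X (B : pset (pset X)) (F : simplex n -> X) :
  (forall b, B b -> simplex_top n (fun s => b (F s))) ->
  tcont (simplex_top n) (gen_top B) F.
Proof.
move=> HB V HV x Hx; have [l [Hl1 [Hl2 Hl3]]] := HV _ Hx.
have [r [Hr Hb]] := inter_open n X F l x
  (List.Forall_impl _ (fun b Hb => HB b Hb) Hl1) Hl2.
by exists r; split=> // y Hy; apply/Hl3/Hb.
Qed.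

Definition sp eps (sg : simplex 1) := eps / 2 * proj1_sig sg 1%N.

Definition rmin_list {A} (f : A -> R) (l : list A) :=
  List.fold_right (fun i m => Rmin (f i) m) 1 l.

Lemma rmin_list_pos {A} (f : A -> R) l : (forall i, 0 < f i) -> 0 < rmin_list f l.
Proof. move=> Hf; elim: l => [|i l IH] /=; first lra. have := Hf i; rcases. Qed.

Lemma rmin_list_le {A} (f : A -> R) l i : List.In i l -> rmin_list f l <= f i.
Proof.
elim: l => [//|j l IH] /= [->|Hi]; first by rcases.
have := IH Hi; rcases.
Qed.

Lemma sub_open eps (He : eps < 1) (C : pset (Iv eps)) (V : pset (real sq2)) :
  0 < eps -> Defs.compact (Iv_top eps) C -> real_top sq2 V ->
  simplex_top 1 (fun sg => forall a, C a -> V (gam eps He (sp eps sg) a)).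
Proof.
move=> He0 HC HV sg0 H0.
set s0 := sp eps sg0.
have HW := HV 2%N tt.
pose P (p : Iv eps * R) := 0 < p.2 /\ forall y : cube 2,
  (forall k, (k < 2)%N -> Rabs (proj1_sig y k - psi s0 (proj1_sig p.1) k) < p.2) ->
  V (@rcell sq2 2%N tt y).
pose I := {p | P p}.
pose U (i : I) (t : Iv eps) := Rabs (proj1_sig t - proj1_sig (proj1_sig i).1) < (proj1_sig i).2 / 2.
have HU : forall i, Iv_top eps (U i).
  move=> [[a r] Hp] t; rewrite /U /= => Ht; have Hr := proj1 Hp.
  exists (r / 2 - Rabs (proj1_sig t - proj1_sig a)); split; first lra.
  move=> y Hy; rcases.
have Hcov : forall t, C t -> exists i, U i t.
  move=> t Ct; have [r [Hr Hb]] := HW _ (H0 t Ct).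
  have Pi : P (t, r) by split.
  exists (exist _ (t, r) Pi); rewrite /U /=; rcases.
have [l Hl] := HC I U HU Hcov.
pose f (i : I) := (proj1_sig i).2 / 2.
have Hf : forall i, 0 < f i.
  move=> [[a r] Hp]; rewrite /f /=; case: Hp => Hr0 _ /=.
  simpl in Hr0; lra.
exists (rmin_list f l); split; first exact: rmin_list_pos.
move=> sg Hsg a Ca.
have [[[b r] Hp] [Hi Hu]] := Hl a Ca.
case: (Hp) => Hr Hb.
have Hle := rmin_list_le f l _ Hi; rewrite /f /= in Hle.
rewrite /U /= in Hu.
apply: Hb => k Hk /=.
have Hk1 := Hsg 1%N isT.
have Hl1 := psi_lip (sp eps sg) s0 (proj1_sig a) (proj1_sig b) k Hk.
have : Rabs (sp eps sg - s0) <= Rabs (proj1_sig sg 1%N - proj1_sig sg0 1%N).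
  rewrite /s0 /sp -Rmult_minus_distr_l Rabs_mult (Rabs_right (eps/2)); last lra.
  have := Rabs_pos (proj1_sig sg 1%N - proj1_sig sg0 1%N); nra.
rewrite /f in Hk1; simpl in Hr; lra.
Qed.

Definition Phi eps (He : eps < 1) (sg : simplex 1) : Pm (v00 : sq2 0%N) eps :=
  exist _ (gam eps He (sp eps sg)) (gam_Pm eps He (sp eps sg)).

Lemma Phi_cont eps (He : eps < 1) : 0 < eps ->
  tcont (simplex_top 1) (initial (TOP_top sq2 eps) (@proj1_sig _ _)) (Phi eps He).
Proof.
move=> He0; apply: tcont_initial; apply: tcont_kel.
apply: gen_top_cont => b [C [V [HC [HV Hb]]]].
apply: (simplex_top_ext _ _ _ _ (sub_open eps He C V He0 HC HV)).
by move=> x; rewrite Hb.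
Qed.

Definition b2R (b : bool) : R := if b then 1 else 0.

Definition coord (p : rpt sq2) : R * R :=
  match p with existT n (c, x) =>
  (match n return sq2_cell n -> cube n -> R * R with
   | 0%N => fun c _ => (b2R c.1, b2R c.2)
   | 1%N => fun c x => if c.1 then (b2R c.2, proj1_sig x 0%N) else (proj1_sig x 0%N, b2R c.2)
   | 2%N => fun _ x => (proj1_sig x 0%N, proj1_sig x 1%N)
   | _ => fun _ _ => (0, 0)
   end) c x
  end.

Lemma coord_base (p q : rpt sq2) : rbase p q -> coord p = coord q.
Proof.
move=> [n [i [a [c [x [y [Hi [-> [-> Hy]]]]]]]]].
case: n c x y Hi Hy => [|[|n]] c x y Hi Hy /=.
- case: i Hi Hy => // _ Hy; rewrite Hy /ins /=.
  by clear Hy; case: c => [[] []]; case: a.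
- case: i Hi Hy => [|[|i]] // _ Hy; rewrite !Hy /ins /=; clear Hy; by case: a.
- by case: c.
Qed.

Lemma coord_Rgen (p q : rpt sq2) : Rgen p q -> coord p = coord q.
Proof.
move=> H; apply: (H (fun p q => coord p = coord q)).
- by [].
- by move=> ? ? ->.
- by move=> ? ? ? E1 E2; rewrite E1 E2.
- exact: coord_base.
Qed.

Lemma rcell_coord n m (c : sq2 n) (d : sq2 m) x y :
  rcell c x = rcell d y -> coord (mkpt c x) = coord (mkpt d y).
Proof.
move=> E; apply: coord_Rgen.
have E' := f_equal (@proj1_sig _ _) E; simpl in E'.
have : cls (mkpt d y) (mkpt d y) by apply: Rgen_refl.
by rewrite -E'.
Qed.

Definition e1f (t : R) (k : nat) : R := if k is 0%N then t else 0.

Lemma e1_cube eps (He : eps < 1) (t : Iv eps) : forall k,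
  ((k < 1)%N -> 0 <= e1f (proj1_sig t) k <= 1) /\ ((1 <= k)%N -> e1f (proj1_sig t) k = 0).
Proof. case: t => t /= Ht [|k] /=; split=> // _; lra. Qed.

Definition ept eps (He : eps < 1) (t : Iv eps) : cube 1 :=
  exist _ (e1f (proj1_sig t)) (e1_cube eps He t).

Definition edge eps (He : eps < 1) (t : Iv eps) : real bd2 :=
  @rcell bd2 1%N (false, false) (ept eps He t).

Lemma edge_Pm eps He : Pm_pred (v00 : bd2 0%N) (edge eps He).
Proof.
exists 0%N, (false, false); split; first by [].
exists (ept eps He); split=> //; split.
- by move=> [|k] [a Ha] [b Hb] /= Hab //; lra.
- by move=> [t Ht].
Qed.

Lemma germ_refl {X} eps (g : Iv eps -> X) : 0 < eps -> germ_eq eps g g.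
Proof. by move=> He; exists (eps / 2); split; [lra|]. Qed.

Lemma germ_sym {X} eps (g h : Iv eps -> X) : germ_eq eps g h -> germ_eq eps h g.
Proof. by move=> [e [He H]]; exists e; split=> // t Ht; rewrite H. Qed.

Lemma germ_trans {X} eps (g h k : Iv eps -> X) :
  germ_eq eps g h -> germ_eq eps h k -> germ_eq eps g k.
Proof.
move=> [e1 [He1 H1]] [e2 [He2 H2]]; exists (Rmin e1 e2); split; first by rcases.
move=> t Ht; rewrite H1 ?H2 //; rcases.
Qed.

Lemma germ_map {X Y} eps (f : X -> Y) (g h : Iv eps -> X) :
  germ_eq eps g h -> germ_eq eps (fun t => f (g t)) (fun t => f (h t)).
Proof. by move=> [e [He H]]; exists e; split=> // t Ht; rewrite H. Qed.

Lemma sig_eq' {A} (P : A -> Prop) (x y : {a | P a}) : proj1_sig x = proj1_sig y -> x = y.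
Proof.
case: x => x Hx; case: y => y Hy /= E; subst y.
by rewrite (proof_irrelevance _ Hx Hy).
Qed.

Lemma gq_eq (K : precubical) (alpha : K 0%N) eps (g1 g2 : Pm alpha eps) :
  germ_eq eps (proj1_sig g1) (proj1_sig g2) -> gq g1 = gq g2.
Proof.
move=> H; apply: sig_eq' => /=.
apply: functional_extensionality => d; apply: propositional_extensionality.
split=> Hd; first exact: germ_trans (germ_sym _ _ _ H) Hd.
exact: germ_trans H Hd.
Qed.

Lemma in_image eps (He : eps < 1) (He0 : 0 < eps) s (Hs : 0 < s) (g : Pm (v00 : sq2 0%N) eps) :
  (forall t, proj1_sig g t = gam eps He s t) ->
  exists x, gq g = G_map bd2 sq2 incl2 v00 eps x.
Proof.
move=> Hg.
pose ge : Pm (v00 : bd2 0%N) eps := exist _ (edge eps He) (edge_Pm eps He).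
exists (gq ge); rewrite /G_map.
case: (constructive_indefinite_description _ _) => g' /= Hg'.
have H1 : germ_eq eps (proj1_sig g') (proj1_sig ge).
  have := f_equal (fun S => S ge) Hg'; simpl => <-; exact: germ_refl.
apply: gq_eq => /=.
apply: (germ_trans _ _ (fun t => real_map bd2 sq2 incl2 (edge eps He t))); last first.
  exact: germ_map (germ_sym _ _ _ H1).
exists (Rmin s (eps / 2)); split; first by rcases.
move=> t Ht; rewrite Hg /edge real_map_cell.
apply: real_eq => /=; apply: cls_eq; apply: Rgen_sym; apply: Rgen_base.
exists 1%N, 1%N, false, tt, (ept eps He t), (cpt eps He s t).
split=> //; split; first by [].
split; first by [].
case: t Ht => t Ht /= Hle [|[|k]] //=; rewrite /ins /= /psi /mm; rcases.
Qed.

Lemma not_in_image eps (He : eps < 1) (He0 : 0 < eps) (g : Pm (v00 : sq2 0%N) eps) :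
  (forall t, proj1_sig g t = gam eps He 0 t) ->
  forall x, gq g <> G_map bd2 sq2 incl2 v00 eps x.
Proof.
move=> Hg x; rewrite /G_map; case: (constructive_indefinite_description _ _) => g' /= _ E.
have H : germ_eq eps (proj1_sig g) (fun t => real_map bd2 sq2 incl2 (proj1_sig g' t)).
  have := f_equal (fun S => proj1_sig S (Pm_map bd2 sq2 incl2 v00 eps g')) E; simpl => ->.
  exact: germ_refl.
clear E; case: g' H => gf Hp /= H.
case: Hp => n [c [_ [phi [[_ Hsum] Hgf]]]].
case: H => e' [[He1 He2] Heq].
have Ht : 0 <= e' <= eps by lra.
pose t : Iv eps := exist _ e' Ht.
have := Heq t (Rle_refl _); rewrite Hg Hgf real_map_cell => /rcell_coord.
case: n c phi Hsum Hgf => [|n] c phi Hsum Hgf; last by case: c.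
have := Hsum t; rewrite /= => Ht0.
case: c Hgf => [[] []] /= _; rewrite /psi /mm Ht0; case=> *; rcases.
Qed.

Definition spv (d : R) (k : nat) : R := match k with 0%N => 1 - d | 1%N => d | _ => 0 end.

Lemma spv_simplex d : 0 <= d <= 1 ->
  (forall k, (k <= 1)%N -> 0 <= spv d k) /\ (forall k, (1 < k)%N -> spv d k = 0) /\
  sum_f_R0 (spv d) 1 = 1.
Proof.
move=> Hd; split; first by case=> [|[|k]] //= _; lra.
split; first by case=> [|[|k]].
rewrite /=; lra.
Qed.

Lemma not_ci eps (Heps : 0 < eps < 1) :
  ~ closed_inclusion (G_top (v00 : bd2 0%nat) eps) (G_top (v00 : sq2 0%nat) eps)
      (G_map bd2 sq2 incl2 v00 eps).
Proof.
move=> [_ [Hcl _]].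
have He : eps < 1 by lra.
have He0 : 0 < eps by lra.
have H := Hcl 1%N (Phi eps He) (Phi_cont eps He He0).
have H0 : 0 <= 0 <= 1 by lra.
pose s0 : simplex 1 := exist _ (spv 0) (spv_simplex 0 H0).
have [r [Hr Hb]] := H s0 (fun '(ex_intro x E) =>
  not_in_image eps He He0 (Phi eps He s0)
    (fun t => f_equal (fun s => gam eps He s t) (Rmult_0_r (eps / 2))) x E).
set d := Rmin (r / 2) (1 / 2).
have Hd : 0 <= d <= 1 by rewrite /d; rcases.
have Hd0 : 0 < d by rewrite /d; rcases.
pose s1 : simplex 1 := exist _ (spv d) (spv_simplex d Hd).
apply: (Hb s1).
  by case=> [|[|k]] //= _; rewrite /d; rcases.
apply: (in_image eps He He0 (eps / 2 * d)); first by nra.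
by [].
Qed.

Theorem proposition4p4 (eps : R) (Heps : (0 < eps < 1)%R) :
  ~ closed_inclusion (G_top (v00 : bd2 0%nat) eps) (G_top (v00 : sq2 0%nat) eps)
      (G_map bd2 sq2 incl2 v00 eps) /\
  ~ h_cofibration (G_top (v00 : bd2 0%nat) eps) (G_top (v00 : sq2 0%nat) eps)
      (G_map bd2 sq2 incl2 v00 eps).
Proof.
split; first exact: not_ci.
by move=> [Hc _]; apply: (not_ci eps Heps).
Qed.
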